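(* Let $\alpha\neq0$ and consider the $1$-parameter family of Monge forms $f(x,y,t)=y^2+x^2y+\tfrac14x^4+\alpha x^5+tx^3$. Then the family of asymptotic BDEs $f_{yy}\,dy^2+2f_{xy}\,dx\,dy+f_{xx}\,dx^2=0$ (parametrized by $t$ near $0$) is fiber topologically equivalent, at $(x,y,t)=0$, to the family $dy^2+(-y+x^3+tx)\,dx^2=0$.
   Context: Two families of BDEs $\{\omega_{t}\}$ and $\{\omega'_{t}\}$ on $(\mathbb{R}^2,0)$ parametrized by $t\in(\mathbb{R},0)$ are fiber topologically equivalent if there is a germ of homeomorphism $(x,y,t)\mapsto(h(x,y,t),k(t))$ of $(\mathbb{R}^3,0)$, with $k$ a homeomorphism germ of the parameter line, such that for each $t$ the map $h(\cdot,\cdot,t)$ sends integral curves of $\omega_{t}$ to integral curves of $\omega'_{k(t)}$. *)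

(* Defs.v *)
From Stdlib Require Import Reals.
Open Scope R_scope.

Definition P3 : Type := (R * R * R)%type.
Definition orig3 : P3 := (0, 0, 0).
Definition dist3 (p q : P3) : R :=
  match p, q with
  | (x1, y1, t1), (x2, y2, t2) =>
      Rmax (Rabs (x1 - x2)) (Rmax (Rabs (y1 - y2)) (Rabs (t1 - t2)))
  end.

Definition open3 (U : P3 -> Prop) : Prop :=
  forall p, U p -> exists e, 0 < e /\ forall q, dist3 p q < e -> U q.
Definition cont_on3 (F : P3 -> P3) (U : P3 -> Prop) : Prop :=
  forall p, U p -> forall e, 0 < e -> exists d, 0 < d /\
    forall q, U q -> dist3 p q < d -> dist3 (F p) (F q) < e.

(* F restricted to the open neighbourhood U of 0 is a homeomorphism onto
   the open neighbourhood V of 0, with inverse G, and F 0 = 0.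
   (A representative of a germ of homeomorphism of (R^3,0).) *)
Definition homeo3_on (F : P3 -> P3) (U V : P3 -> Prop) (G : P3 -> P3) : Prop :=
  open3 U /\ open3 V /\ U orig3 /\ V orig3 /\ F orig3 = orig3 /\
  (forall p, U p -> V (F p) /\ G (F p) = p) /\
  (forall q, V q -> U (G q) /\ F (G q) = q) /\
  cont_on3 F U /\ cont_on3 G V.

Definition open1 (U : R -> Prop) : Prop :=
  forall p, U p -> exists e, 0 < e /\ forall q, Rabs (p - q) < e -> U q.
Definition cont_on1 (F : R -> R) (U : R -> Prop) : Prop :=
  forall p, U p -> forall e, 0 < e -> exists d, 0 < d /\
    forall q, U q -> Rabs (p - q) < d -> Rabs (F p - F q) < e.

Definition homeo_germ1 (k : R -> R) : Prop :=
  exists (U V : R -> Prop) (l : R -> R),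
    open1 U /\ open1 V /\ U 0 /\ V 0 /\ k 0 = 0 /\
    (forall p, U p -> V (k p) /\ l (k p) = p) /\
    (forall q, V q -> U (l q) /\ k (l q) = q) /\
    cont_on1 k U /\ cont_on1 l V.

(* A family of BDEs  a dy^2 + 2 b dx dy + c dx^2 = 0, coefficients
   depending on (x, y, t). *)
Record BDEfam : Type := mkBDE {
  bde_a : R -> R -> R -> R;
  bde_b : R -> R -> R -> R;
  bde_c : R -> R -> R -> R }.

Definition integral_curve (w : BDEfam) (t s0 s1 : R) (g1 g2 : R -> R) : Prop :=
  s0 < s1 /\
  exists d1 d2 : R -> R, forall s, s0 < s < s1 ->
    derivable_pt_lim g1 s (d1 s) /\ derivable_pt_lim g2 s (d2 s) /\
    continuity_pt d1 s /\ continuity_pt d2 s /\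
    (d1 s <> 0 \/ d2 s <> 0) /\
    bde_a w (g1 s) (g2 s) t * (d2 s) ^ 2
      + 2 * bde_b w (g1 s) (g2 s) t * d1 s * d2 s
      + bde_c w (g1 s) (g2 s) t * (d1 s) ^ 2 = 0.

(* Fiber topological equivalence of two families of BDEs at 0:
   a germ of homeomorphism (x,y,t) |-> (h(x,y,t), k(t)) of (R^3,0), k a germ
   of homeomorphism of (R,0), such that for each t, h(.,.,t) sends
   integral curves of w_t (inside the domain) onto integral curves of
   w'_{k(t)} (equality of traces). *)
Definition fiber_top_equiv (w w' : BDEfam) : Prop :=
  exists (h1 h2 : R -> R -> R -> R) (k : R -> R)
         (U V : P3 -> Prop) (G : P3 -> P3),
    homeo_germ1 k /\
    homeo3_on (fun p => match p with (x, y, t) => (h1 x y t, h2 x y t, k t) end)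
              U V G /\
    forall (t s0 s1 : R) (g1 g2 : R -> R),
      integral_curve w t s0 s1 g1 g2 ->
      (forall s, s0 < s < s1 -> U (g1 s, g2 s, t)) ->
      exists (s0' s1' : R) (e1 e2 : R -> R),
        integral_curve w' (k t) s0' s1' e1 e2 /\
        forall u v : R,
          (exists s, s0 < s < s1 /\
             h1 (g1 s) (g2 s) t = u /\ h2 (g1 s) (g2 s) t = v) <->
          (exists s', s0' < s' < s1' /\ e1 s' = u /\ e2 s' = v).

Definition is_partial_x (F Fx : R -> R -> R -> R) : Prop :=
  forall x y t, derivable_pt_lim (fun u => F u y t) x (Fx x y t).
Definition is_partial_y (F Fy : R -> R -> R -> R) : Prop :=
  forall x y t, derivable_pt_lim (fun u => F x u t) y (Fy x y t).

Definition monge_f (alpha : R) (x y t : R) : R :=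
  y ^ 2 + x ^ 2 * y + / 4 * x ^ 4 + alpha * x ^ 5 + t * x ^ 3.

Definition normal_form : BDEfam :=
  mkBDE (fun _ _ _ => 1) (fun _ _ _ => 0) (fun x y t => - y + x ^ 3 + t * x).

(* Main.v *)
Require Import Defs.
From Stdlib Require Import Reals Lra FunctionalExtensionality.
From Coquelicot Require Import Coquelicot.
Open Scope R_scope.

Section Helpers.
Context {U : UniformSpace}.
Lemma cU_plus (f g : U -> R) p : continuous f p -> continuous g p ->
  continuous (fun q => f q + g q) p.
Proof. intros; now apply (continuous_plus (K:=R_AbsRing) f g). Qed.
Lemma cU_mult (f g : U -> R) p : continuous f p -> continuous g p ->
  continuous (fun q => f q * g q) p.
Proof. intros; now apply (continuous_mult (K:=R_AbsRing) f g). Qed.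
Lemma cU_const (c : R) p : continuous (fun _ : U => c) p.
Proof. apply continuous_const. Qed.
End Helpers.

Lemma c_px (p : P3) : continuous (fun q : P3 => fst (fst q)) p.
Proof.
  destruct p as [[x y] t].
  apply (continuous_comp (fun q : P3 => fst q) fst).
  apply continuous_fst. apply continuous_fst.
Qed.
Lemma c_py (p : P3) : continuous (fun q : P3 => snd (fst q)) p.
Proof.
  destruct p as [[x y] t].
  apply (continuous_comp (fun q : P3 => fst q) snd).
  apply continuous_fst. apply continuous_snd.
Qed.
Lemma c_pt (p : P3) : continuous (fun q : P3 => snd q) p.
Proof. destruct p as [[x y] t]. apply continuous_snd. Qed.

Lemma bridge (f : P3 -> R) p : continuous f p ->
  forall e, 0 < e -> exists d, 0 < d /\ forall q, dist3 p q < d -> Rabs (f p - f q) < e.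
Proof.
  intros Hc e He.
  destruct (proj1 (filterlim_locally f (f p)) Hc (mkposreal e He)) as [d Hd].
  exists d. split. apply cond_pos.
  intros q Hq. destruct p as [[x1 y1] t1]; destruct q as [[x2 y2] t2].
  simpl in Hq.
  apply Rmax_Rlt in Hq as [H1 H2]. apply Rmax_Rlt in H2 as [H2 H3].
  assert (B : ball (x1, y1, t1) d (x2, y2, t2)).
  { split; [split|]; simpl; unfold AbsRing_ball, abs, minus, plus, opp; simpl;
      rewrite Rabs_minus_sym in *; unfold Rminus in *; assumption. }
  specialize (Hd _ B). simpl in Hd. unfold AbsRing_ball, abs, minus, plus, opp in Hd; simpl in Hd.
  rewrite Rabs_minus_sym. exact Hd.
Qed.

Lemma cont3 (a b c : P3 -> R) :
  (forall p, continuous a p) -> (forall p, continuous b p) -> (forall p, continuous c p) ->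
  cont_on3 (fun p => (a p, b p, c p)) (fun _ => True).
Proof.
  intros Ha Hb Hc p _ e He.
  destruct (bridge a p (Ha p) e He) as [d1 [P1 D1]].
  destruct (bridge b p (Hb p) e He) as [d2 [P2 D2]].
  destruct (bridge c p (Hc p) e He) as [d3 [P3' D3]].
  exists (Rmin d1 (Rmin d2 d3)). split.
  { apply Rmin_pos; auto. apply Rmin_pos; auto. }
  intros q _ Hq.
  assert (Hq1 : dist3 p q < d1) by (eapply Rlt_le_trans; [exact Hq| apply Rmin_l]).
  assert (Hq2 : dist3 p q < d2) by (eapply Rlt_le_trans; [exact Hq| eapply Rle_trans; [apply Rmin_r|apply Rmin_l]]).
  assert (Hq3 : dist3 p q < d3) by (eapply Rlt_le_trans; [exact Hq| eapply Rle_trans; [apply Rmin_r|apply Rmin_r]]).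
  simpl. apply Rmax_Rlt; split; [|apply Rmax_Rlt; split]; auto.
Qed.

Ltac contp := repeat first
  [ apply cU_plus | apply cU_mult | apply cU_const | apply c_px | apply c_py | apply c_pt ].

Lemma dR_plus f g x a b : is_derive f x a -> is_derive g x b ->
  is_derive (fun s => f s + g s) x (a + b).
Proof. intros; now apply (is_derive_plus (K:=R_AbsRing) f g). Qed.
Lemma dR_mult f g x a b : is_derive f x a -> is_derive g x b ->
  is_derive (fun s => f s * g s) x (a * g x + f x * b).
Proof. intros; apply (is_derive_mult (K:=R_AbsRing) f g); auto. intros; apply Rmult_comm. Qed.

Lemma dR_eq (f : R -> R) (x a b : R) : is_derive f x a -> a = b -> is_derive f x b.
Proof. intros H ->; exact H. Qed.

Theorem mainTheorem13 (alpha : R) (Halpha : alpha <> 0)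
  (fx fy fxx fxy fyy : R -> R -> R -> R)
  (Hfx : is_partial_x (monge_f alpha) fx)
  (Hfy : is_partial_y (monge_f alpha) fy)
  (Hfxx : is_partial_x fx fxx)
  (Hfxy : is_partial_y fx fxy)
  (Hfyy : is_partial_y fy fyy) :
  fiber_top_equiv (mkBDE fyy fxy fxx) normal_form.
Proof.
  assert (Efx : fx = fun x y t => 2*x*y + 3*x^2*t + x^3 + 5*alpha*x^4).
  { extensionality x; extensionality y; extensionality t.
    eapply uniqueness_limite. apply Hfx. unfold monge_f.
    apply is_derive_Reals. auto_derive; [easy|field]. }
  assert (Efy : fy = fun x y t => 2*y + x^2).
  { extensionality x; extensionality y; extensionality t.
    eapply uniqueness_limite. apply Hfy. unfold monge_f.
    apply is_derive_Reals. auto_derive; [easy|field]. }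
  assert (Efxx : forall x y t, fxx x y t = 2*y + 6*x*t + 3*x^2 + 20*alpha*x^3).
  { intros x y t. eapply uniqueness_limite. apply Hfxx. rewrite Efx.
    apply is_derive_Reals. auto_derive; [easy|field]. }
  assert (Efxy : forall x y t, fxy x y t = 2*x).
  { intros x y t. eapply uniqueness_limite. apply Hfxy. rewrite Efx.
    apply is_derive_Reals. auto_derive; [easy|field]. }
  assert (Efyy : forall x y t, fyy x y t = 2).
  { intros x y t. eapply uniqueness_limite. apply Hfyy. rewrite Efy.
    apply is_derive_Reals. auto_derive; [easy|field]. }
  set (c1 := 10 * alpha). set (c2 := - (100 * alpha * alpha)). set (c3 := 30 * alpha).
  assert (N1 : c1 <> 0) by (unfold c1; intro; apply Halpha; lra).
  assert (N2 : c2 <> 0) by (unfold c2; intro; apply Halpha; nra).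
  assert (N3 : c3 <> 0) by (unfold c3; intro; apply Halpha; lra).
  exists (fun x y t => c1 * x), (fun x y t => c2 * (y + x * x * / 2)), (fun t => c3 * t),
    (fun _ => True), (fun _ => True),
    (fun q => match q with (X, Y, T) =>
       (/c1 * X, /c2 * Y - (/c1 * X) * (/c1 * X) * /2, /c3 * T) end).
  split; [|split].
  - exists (fun _ => True), (fun _ => True), (fun T => /c3 * T).
    repeat split; try (intros ? ?; exists 1; split; [lra|easy]).
    + ring.
    + intros; field; auto.
    + intros; field; auto.
    + intros p _ e He. exists (e / Rabs c3). split.
      { apply Rdiv_lt_0_compat; auto. apply Rabs_pos_lt; auto. }
      intros q _ Hq. rewrite <- Rmult_minus_distr_l, Rabs_mult.
      apply Rabs_pos_lt in N3.
      apply (Rmult_lt_compat_l (Rabs c3)) in Hq; auto.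
      replace (Rabs c3 * (e / Rabs c3)) with e in Hq by (field; lra). exact Hq.
    + intros p _ e He. exists (e * Rabs c3). split.
      { apply Rmult_lt_0_compat; auto. apply Rabs_pos_lt; auto. }
      intros q _ Hq. rewrite <- Rmult_minus_distr_l, Rabs_mult, Rabs_inv.
      apply Rabs_pos_lt in N3.
      apply (Rmult_lt_compat_l (/ Rabs c3)) in Hq; [|apply Rinv_0_lt_compat; auto].
      replace (/ Rabs c3 * (e * Rabs c3)) with e in Hq by (field; lra). exact Hq.
  - repeat split; try (intros ? ?; exists 1; split; [lra|easy]).
    + unfold orig3; simpl; f_equal; [f_equal|]; ring.
    + destruct p as [[x y] t]. simpl. f_equal; [f_equal|]; field; auto.
    + destruct q as [[x y] t]. simpl. f_equal; [f_equal|]; field; auto.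
    + match goal with |- cont_on3 ?F _ => assert (EF : F = (fun q => (c1 * fst (fst q),
                   c2 * (snd (fst q) + fst (fst q) * fst (fst q) * /2), c3 * snd q)))
        by (extensionality q; destruct q as [[x y] t]; reflexivity) end.
      rewrite EF. apply cont3; intros; contp.
    + match goal with |- cont_on3 ?F _ => assert (EF : F = (fun q => (/c1 * fst (fst q),
                   /c2 * snd (fst q) + (-1) * ((/c1 * fst (fst q)) * (/c1 * fst (fst q)) * /2), /c3 * snd q)))
        by (extensionality q; destruct q as [[x y] t]; simpl; f_equal; f_equal; ring) end.
      rewrite EF. apply cont3; intros; contp.
  - intros t s0 s1 g1 g2 [Hs [d1 [d2 Hd]]] _.
    exists s0, s1, (fun s => c1 * g1 s), (fun s => c2 * (g2 s + g1 s * g1 s * /2)).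
    split.
    + split; auto. exists (fun s => c1 * d1 s), (fun s => c2 * (d2 s + g1 s * d1 s)).
      intros s Hs'. destruct (Hd s Hs') as [D1 [D2 [C1 [C2 [Rg E]]]]].
      simpl in E. rewrite Efyy, Efxy, Efxx in E.
      apply is_derive_Reals in D1. apply is_derive_Reals in D2.
      assert (G1 : continuous g1 s) by (apply (ex_derive_continuous (K:=R_AbsRing) (V:=R_NormedModule)); exists (d1 s); exact D1).
      apply continuity_pt_filterlim in C1. apply continuity_pt_filterlim in C2.
      split; [|split; [|split; [|split; [|split]]]].
      * apply is_derive_Reals. apply is_derive_scal. exact D1.
      * apply is_derive_Reals. apply dR_eq with (c2 * (d2 s + ((d1 s * g1 s + g1 s * d1 s) * /2 + g1 s * g1 s * 0))).
        -- apply is_derive_scal. apply dR_plus; auto.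
           apply (dR_mult (fun s => g1 s * g1 s) (fun _ => /2)). apply dR_mult; auto. apply is_derive_Reals; apply derivable_pt_lim_const.
        -- field.
      * apply continuity_pt_filterlim. apply cU_mult; [apply cU_const|exact C1].
      * apply continuity_pt_filterlim.
        apply (cU_mult (fun _ => c2) (fun s => d2 s + g1 s * d1 s)); [apply cU_const|].
        apply (cU_plus d2 (fun s => g1 s * d1 s)); [exact C2|].
        apply (cU_mult g1 d1); [exact G1|exact C1].
      * destruct (Req_dec (d1 s) 0) as [Z|Z].
        -- right. rewrite Z, Rmult_0_r, Rplus_0_r. apply Rmult_integral_contrapositive; split; auto.
           destruct Rg; tauto.
        -- left. apply Rmult_integral_contrapositive; split; auto.
      * simpl. unfold c1, c2, c3.
        match goal with |- ?L = 0 => match type of E with ?M = 0 =>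
          replace L with ((5000 * alpha^4) * M) by field end end.
        rewrite E. ring.
    + intros u v; split; intros [s [Hs' [E1 E2]]]; exists s; auto.
Qed.
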